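(* If $(T,\mu,\mathcal{A})\in\mathcal{T}$ is $\alpha$-mixing, then $T$ is exact with respect to $\mu$, i.e. $\bigcap_{n\ge0}T^{-n}\mathcal{B}=\{\emptyset,X\}$ modulo $\mu$ (and hence $T$ has positive entropy).
   Context: Let $X=[0,1]$, $\mathcal{B}$ its Borel $\sigma$-algebra, $\lambda$ Lebesgue measure. A partition of $[0,1]$ is a finite or countable family of intervals with nonempty pairwise disjoint interiors whose union is $[0,1]$ up to a $\lambda$-null set. The class $\mathcal{T}$ consists of triples $(T,\mu,\mathcal{A})$ where $\mu$ is a Borel probability measure on $[0,1]$ with $\frac1c\mu(A)\le\lambda(A)\le c\mu(A)$ for all $A\in\mathcal{B}$ for some $c\ge1$, $T:[0,1]\to[0,1]$ is measurable, $\mu$-preserving and ergodic, and $\mathcal{A}$ is a partition of $[0,1]$ such that: $T|_{\mathrm{int}(I)}$ is continuous and strictly monotone for each $I\in\mathcal{A}$; $\bigvee_{j\ge0}T^{-j}\sigma(\mathcal{A})=\mathcal{B}$ mod $\lambda$; and $H(\mathcal{A})=-\sum_{I\in\mathcal{A}}\mu(I)\log\mu(I)<\infty$. Write $\mathcal{A}^l=\bigvee_{j=0}^{l-1}T^{-j}\mathcal{A}$. $(T,\mu,\mathcal{A})\in\mathcal{T}$ is $\alpha$-mixing if there are nonnegative reals $\alpha(n)\to0$ such that for every $l\in\mathbb{N}$, every integer $n\ge0$, every $A\in\sigma(\mathcal{A}^l)$ and every $B\in\mathcal{B}$: $|\mu(A\cap T^{-(n+l)}B)-\mu(A)\mu(B)|\le\alpha(n)$.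 *)

(* Defs.v *)
(* X = [0,1] is represented as the subset
   I01 of an abstract R : realType, with the Borel sigma-algebra of R
   (measurableTypeR R) and Lebesgue measure (lebesgue_measure). *)
From HB Require Import structures.
From mathcomp Require Import all_boot all_order all_algebra.
From mathcomp Require Import all_classical all_reals all_analysis.
Set Implicit Arguments. Unset Strict Implicit. Unset Printing Implicit Defensive.
Import Order.TTheory GRing.Theory Num.Theory.
Import numFieldNormedType.Exports.
Local Open Scope classical_set_scope.
Local Open Scope ring_scope.

Section Defs.
Variable R : realType.
Local Notation RB := (measurableTypeR R).
Local Notation lam := (@lebesgue_measure R).

Definition I01 : set RB := [set x : RB | 0 <= x <= 1].

Definition borel01 (B : set RB) : Prop := measurable B /\ B `<=` I01.

Definition preimg (T : RB -> RB) (n : nat) (B : set RB) : set RB :=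
  I01 `&` (iter n T) @^-1` B.

(* the partition A = {[set` I k] | k in K}, a finite or countable family of
   intervals indexed by K : set nat *)
Definition is_partition (K : set nat) (I : nat -> interval R) : Prop :=
  [/\ forall k, K k -> [set` I k] `<=` I01,
      forall k, K k -> interior [set` I k] !=set0,
      forall j k, K j -> K k -> j <> k ->
        interior [set` I j] `&` interior [set` I k] = set0
    & lam (I01 `\` \bigcup_(k in K) [set` I k]) = 0%E].

Definition sigmaA (K : set nat) (I : nat -> interval R) : set (set RB) :=
  <<s I01, [set [set` I k] | k in K] >>.

Definition join_all (T : RB -> RB) (K : set nat) (I : nat -> interval R)
  : set (set RB) :=
  <<s I01, \bigcup_(j in [set: nat]) [set preimg T j A | A in sigmaA K I] >>.

(* the elements of the partition A^l = \bigvee_{j=0}^{l-1} T^{-j} A *)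
Definition cylinders (T : RB -> RB) (K : set nat) (I : nat -> interval R)
  (l : nat) : set (set RB) :=
  [set C | exists w : nat -> nat, (forall j, (j < l)%N -> K (w j)) /\
     C = I01 `&` \bigcap_(j in [set j : nat | (j < l)%N]) preimg T j [set` I (w j)]].

Definition sigmaAl (T : RB -> RB) (K : set nat) (I : nat -> interval R)
  (l : nat) : set (set RB) := <<s I01, cylinders T K I l >>.

Definition ent (x : R) : R := if x == 0 then 0 else - (x * ln x).

Definition in_classT (T : RB -> RB) (mu : {measure set RB -> \bar R})
  (K : set nat) (I : nat -> interval R) : Prop :=
  [/\
      mu I01 = 1%E /\ mu (~` I01) = 0%E,
      exists c : R, 1 <= c /\ forall A, borel01 A ->
        ((c^-1)%:E * mu A <= lam A)%E /\ (lam A <= c%:E * mu A)%E,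
      [/\ (forall x, I01 x -> I01 (T x)),
          measurable_fun I01 T,
          (forall B, borel01 B -> mu (preimg T 1 B) = mu B)
        & (forall B, borel01 B -> preimg T 1 B = B -> mu B = 0%E \/ mu B = 1%E)],
      is_partition K I &
      [/\
          (forall k, K k -> {within interior [set` I k], continuous T} /\
             ((forall x y, interior [set` I k] x -> interior [set` I k] y ->
                 x < y -> T x < T y) \/
              (forall x y, interior [set` I k] x -> interior [set` I k] y ->
                 x < y -> T y < T x))),
          (forall B, borel01 B -> exists C, join_all T K I C /\
             lam ((B `\` C) `|` (C `\` B)) = 0%E)
        &
          (\esum_(k in K) (ent (fine (mu [set` I k])))%:E < +oo)%E]].

Definition alpha_mixing (T : RB -> RB) (mu : {measure set RB -> \bar R})
  (K : set nat) (I : nat -> interval R) : Prop :=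
  exists alpha : nat -> R, (forall n, 0 <= alpha n) /\ alpha @ \oo --> 0 /\
    forall (l n : nat) (A B : set RB), sigmaAl T K I l A -> borel01 B ->
      (`| mu (A `&` preimg T (n + l) B) - mu A * mu B | <= (alpha n)%:E)%E.

Definition exact (T : RB -> RB) (mu : {measure set RB -> \bar R}) : Prop :=
  forall A : set RB, (forall n, exists B, borel01 B /\ A = preimg T n B) ->
    mu A = 0%E \/ mu A = 1%E.

End Defs.

(* Main.v *)
Require Import Defs.
From HB Require Import structures.
From mathcomp Require Import all_boot all_order all_algebra.
From mathcomp Require Import all_classical all_reals all_analysis.
Import Order.TTheory GRing.Theory Num.Theory.
Local Open Scope classical_set_scope.
Local Open Scope ring_scope.

Lemma zero_lim (R : realType) (alpha : nat -> R) (x : R) :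
  alpha @ \oo --> 0 -> (forall n, `|x| <= alpha n) -> x = 0.
Proof.
move=> ha hx; apply/eqP; apply/negPn/negP => x0.
have x0' : 0 < `|x| by rewrite normr_gt0.
move/cvgr0Pnorm_lt: ha => /(_ _ x0') [N _ HN].
have := HN N (leqnn N); rewrite /= => h.
have := le_lt_trans (hx N) (le_lt_trans (ler_norm _) h).
by rewrite ltxx.
Qed.

Section Pf.
Variable R : realType.
Local Notation RB := (measurableTypeR R).
Local Notation X01 := (@I01 R).
Variable T : RB -> RB.
Variable mu : {measure set RB -> \bar R}.

Lemma I01_meas : measurable (X01).
Proof.
have -> : X01 = `[0, 1]%classic.
  by apply/seteqP; split => x; rewrite /I01 /= in_itv.
exact: measurable_itv.
Qed.

Lemma preimg0 B : preimg T 0 B = X01 `&` B.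
Proof. by []. Qed.

Hypothesis TI : forall x, X01 x -> X01 (T x).
Hypothesis Tm : measurable_fun X01 T.

Lemma iterI n x : X01 x -> X01 (iter n T x).
Proof. by elim: n => //= n IH /IH; apply: TI. Qed.

Lemma preimgS n B : preimg T n.+1 B = preimg T 1 (preimg T n B).
Proof.
apply/seteqP; split => x /=; rewrite /preimg /=.
  by move=> [Ix]; rewrite -iterS iterSr => h; split => //; split; [exact: TI|].
by move=> [Ix [_ h]]; split => //; rewrite -iterS iterSr.
Qed.

Lemma preimg_sub n B : preimg T n B `<=` X01.
Proof. by move=> x []. Qed.

Lemma preimg_meas n B : measurable B -> measurable (preimg T n B).
Proof.
move=> mB; elim: n => [|n IH]; first by rewrite preimg0; apply: measurableI => //; exact: I01_meas.
rewrite preimgS; have := Tm I01_meas _ IH; by [].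
Qed.

Hypothesis mu1 : mu X01 = 1%E.
Hypothesis Tinv : forall B, borel01 B -> mu (preimg T 1 B) = mu B.
Variable c : R.
Hypothesis c1 : 1 <= c.
Hypothesis hc : forall A, borel01 A ->
  ((c^-1)%:E * mu A <= (@lebesgue_measure R) A)%E /\ ((@lebesgue_measure R) A <= c%:E * mu A)%E.

Lemma borel_preimg n B : measurable B -> borel01 (preimg T n B).
Proof. by move=> mB; split; [exact: preimg_meas|exact: preimg_sub]. Qed.

Lemma mu_le1 {X} : borel01 X -> (mu X <= 1)%E.
Proof. by move=> [mX sX]; rewrite -mu1; apply: le_measure => //; rewrite inE //; exact: I01_meas. Qed.

Lemma mu_fin {X} : borel01 X -> mu X \is a fin_num.
Proof.
move=> bX; rewrite ge0_fin_numE //; rewrite (le_lt_trans (mu_le1 bX)) // ltry //.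
Qed.

Lemma preimg_mu n B : borel01 B -> mu (preimg T n B) = mu B.
Proof.
move=> bB; elim: n => [|n IH].
  by rewrite preimg0 setIidr //; case: bB.
by rewrite preimgS Tinv //; apply: borel_preimg; case: bB.
Qed.

Lemma null_lam {X} : borel01 X -> (@lebesgue_measure R) X = 0%E -> mu X = 0%E.
Proof.
move=> bX l0; have [h _] := hc _ bX; rewrite l0 in h.
have r0 : 0 <= fine (mu X) := fine_ge0 (measure_ge0 mu X).
rewrite -(fineK (mu_fin bX)) in h *; congr (_%:E).
move: h; rewrite -EFinM lee_fin pmulr_rle0; last by rewrite invr_gt0; exact: (lt_le_trans ltr01 c1).
by move=> h; apply/eqP; rewrite eq_le h r0.
Qed.

Lemma borel_sigma : sigma_algebra X01 (@borel01 R).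
Proof.
split.
- by split => //; exact: measurable0.
- move=> X [mX sX]; split; [apply: measurableD => //; exact: I01_meas|exact: subDsetl].
- move=> F hF; split; first by apply: bigcupT_measurable => n; case: (hF n).
  by apply: bigcup_sub => n _; case: (hF n).
Qed.

Lemma gen_borel G : (forall X, G X -> borel01 X) -> forall X, <<s X01, G>> X -> borel01 X.
Proof. by move=> hG; apply: smallest_sub => //; exact: borel_sigma. Qed.

Variable K : set nat.
Variable I : nat -> interval R.
Hypothesis IK : forall k, K k -> [set` I k] `<=` X01.

Lemma cyl_borel {l C} : cylinders T K I l C -> borel01 C.
Proof.
move=> [w [wK ->]]; split; last exact: subIsetl.
apply: measurableI; first exact: I01_meas.
apply: bigcap_measurableType => j _; apply: preimg_meas; exact: measurable_itv.
Qed.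

Lemma sigmaAl_borel {l C} : sigmaAl T K I l C -> borel01 C.
Proof. by apply: gen_borel => X; apply: cyl_borel. Qed.

Lemma sigmaA_borel {C} : sigmaA K I C -> borel01 C.
Proof.
apply: gen_borel => X [k Kk <-]; split; [exact: measurable_itv|exact: IK].
Qed.

Variable A : set RB.
Hypothesis hA : forall n, exists B, borel01 B /\ A = preimg T n B.

Lemma A_borel : borel01 A.
Proof.
have [B [bB ->]] := hA 0; rewrite preimg0; case: bB => mB sB.
split; [apply: measurableI => //; exact: I01_meas|exact: subIsetl].
Qed.

Definition good (X : set RB) := borel01 X /\ mu (X `&` A) = (mu X * mu A)%E.

Lemma borelI {X Y : set RB} : borel01 X -> borel01 Y -> borel01 (X `&` Y).
Proof. move=> [mX sX] [mY sY]; split; [exact: measurableI|by move=> x [/sX]]. Qed.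

Variable alpha : nat -> R.
Hypothesis hcvg : alpha @ \oo --> 0.
Hypothesis hmix : forall (l n : nat) (A B : set RB), sigmaAl T K I l A -> borel01 B ->
      (`| mu (A `&` preimg T (n + l) B) - mu A * mu B | <= (alpha n)%:E)%E.

Lemma good_sigmaAl l D : sigmaAl T K I l D -> good D.
Proof.
move=> hD; have bD := sigmaAl_borel hD; split => //.
have bA := A_borel; have bDA := borelI bD bA.
rewrite -(fineK (mu_fin bDA)) -(fineK (mu_fin bD)) -(fineK (mu_fin bA)) -EFinM.
congr (_%:E); apply/eqP; rewrite -subr_eq0; apply/eqP.
apply: (@zero_lim R alpha _ hcvg) => n.
have [B [bB eA]] := hA (n + l).
have := hmix l n D B hD bB; rewrite -eA -(preimg_mu (n + l) _ bB) -eA.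
by rewrite -(fineK (mu_fin bDA)) -(fineK (mu_fin bD)) -(fineK (mu_fin bA)) -EFinM -EFinB /= lee_fin.
Qed.

Lemma null_sub {Z W : set RB} : measurable Z -> measurable W -> Z `<=` W -> mu W = 0%E -> mu Z = 0%E.
Proof.
move=> mZ mW ZW hW; apply/eqP; rewrite eq_le measure_ge0 andbT -hW.
by apply: le_measure => //; rewrite inE.
Qed.

Lemma null_eq {X Y : set RB} : measurable X -> measurable Y ->
  mu (X `\` Y) = 0%E -> mu (Y `\` X) = 0%E -> mu X = mu Y.
Proof.
move=> mX mY h1 h2; rewrite (measureDI mu mX mY) (measureDI mu mY mX) setIC.
by congr (_ + _)%E; rewrite [LHS]h1 [RHS]h2.
Qed.

Lemma good_null {X Y} : good X -> borel01 Y -> mu (X `\` Y) = 0%E -> mu (Y `\` X) = 0%E -> good Y.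
Proof.
move=> [[mX sX] hX] [mY sY] h1 h2; split; first by [].
have [mA sA] := A_borel.
rewrite -(null_eq mX mY h1 h2); apply: (eq_trans _ hX); symmetry.
apply: null_eq.
- exact: measurableI.
- exact: measurableI.
- apply: (null_sub _ (measurableD mX mY) _ h1).
    by apply: measurableD; exact: measurableI.
  by move=> x [[Xx Ax] nY]; split => // Yx; apply: nY.
- apply: (null_sub _ (measurableD mY mX) _ h2).
    by apply: measurableD; exact: measurableI.
  by move=> x [[Yx Ax] nX]; split => // Xx; apply: nX.
Qed.

Lemma good_lambda : lambda_system X01 good.
Proof.
have [mA sA] := A_borel.
split.
- by move=> X [[]].
- split; first by split => //; exact: I01_meas.
  by rewrite setIidr // mu1 mul1e.
- move=> X Y YX [[mX sX] hX] [[mY sY] hY]; split.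
    by split; [exact: measurableD|move=> x [/sX]].
  have e1 : (X `\` Y) `&` A = (X `&` A) `\` (Y `&` A).
    by apply/seteqP; split => x /=; [move=> [[Xx nY] Ax]; split => // -[]|move=> [[Xx Ax] h]; split => //; split => // Yx; apply: h].
  have bX : borel01 X by [].
  have bY : borel01 Y by [].
  have bXA := borelI bX (conj mA sA).
  have bYA := borelI bY (conj mA sA).
  have E1 : mu ((X `\` Y) `&` A) = (mu (X `&` A) - mu (Y `&` A))%E.
    rewrite e1 measureD; try (by case: bXA); try (by case: bYA); last first.
      by rewrite -ge0_fin_numE //; exact: mu_fin.
    have -> : (X `&` A) `&` (Y `&` A) = Y `&` A.
      by apply/seteqP; split => x /=; [move=> [_ []]|move=> [Yx Ax]; split => //; split => //; apply: YX].
    by [].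
  have E2 : mu (X `\` Y) = (mu X - mu Y)%E.
    rewrite measureD //; last by rewrite -ge0_fin_numE //; exact: mu_fin.
    by rewrite (setIidr YX).
  rewrite E1 E2 hX hY muleBl //; first exact: mu_fin.
  by apply: fin_num_adde_defl; rewrite fin_numN; exact: mu_fin.
- move=> F ndF hF.
  have bF : borel01 (\bigcup_n F n).
    split; first by apply: bigcupT_measurable => n; case: (hF n) => [[]].
    by apply: bigcup_sub => n _; case: (hF n) => [[]].
  split => //.
  have h1 : (fun n => mu (F n `&` A)) @ \oo --> mu (\bigcup_n F n `&` A).
    rewrite setI_bigcupl; apply: nondecreasing_cvg_mu.
    - by move=> n; apply: measurableI => //; case: (hF n) => [[]].
    - by apply: bigcupT_measurable => n; apply: measurableI => //; case: (hF n) => [[]].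
    - by move=> m n mn; apply/subsetPset; apply: setSI; apply/subsetPset; exact: ndF.
  have h2 : (fun n => mu (F n `&` A)) @ \oo --> (mu (\bigcup_n F n) * mu A)%E.
    have -> : (fun n => mu (F n `&` A)) = (fun n => mu (F n) * mu A)%E.
      by apply: funext => n; case: (hF n).
    have h3 : (fun n => mu (F n)) @ \oo --> mu (\bigcup_n F n).
      apply: nondecreasing_cvg_mu; first by move=> n; case: (hF n) => [[]].
        by case: bF.
      exact: ndF.
    apply: cvgeM => //; last exact: cvg_cst.
    by apply: mule_def_fin; [exact: mu_fin|exact: mu_fin].
  exact: (cvg_unique _ h1 h2).
Qed.

Lemma null_bigcup (G : nat -> set RB) : (forall n, measurable (G n)) -> (forall n, mu (G n) = 0%E) ->
  mu (\bigcup_n G n) = 0%E.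
Proof.
move=> mG hG; apply/eqP; rewrite eq_le measure_ge0 andbT.
have := @measure_sigma_subadditive _ _ _ mu (\bigcup_n G n) G mG (bigcupT_measurable _ mG) (fun x h => h).
rewrite eseries0 //; move=> i _ _; exact: hG.
Qed.

Hypothesis hN : (@lebesgue_measure R) (X01 `\` \bigcup_(k in K) [set` I k]) = 0%E.
Local Notation Nset := (X01 `\` \bigcup_(k in K) [set` I k]).

Lemma Nset_borel : borel01 Nset.
Proof.
split; last exact: subDsetl.
apply: measurableD; first exact: I01_meas.
by apply: bigcup_measurable => k _; exact: measurable_itv.
Qed.

Lemma Nset_null n : mu (preimg T n Nset) = 0%E.
Proof. by rewrite preimg_mu; [exact: null_lam Nset_borel hN|exact: Nset_borel]. Qed.

Definition Q l := [set X | borel01 X /\ exists D, sigmaAl T K I l D /\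
  mu (X `\` D) = 0%E /\ mu (D `\` X) = 0%E].

Lemma Q_good l X : Q l X -> good X.
Proof.
move=> [bX [D [hD [h1 h2]]]]; exact: (good_null (good_sigmaAl _ _ hD) bX h2 h1).
Qed.

Lemma Q_sigma l : sigma_algebra X01 (Q l).
Proof.
have [S0 SC SU] := @smallest_sigma_algebra _ X01 (cylinders T K I l).
split.
- split; first by split; [exact: measurable0|by []].
  by exists set0; split => //; rewrite set0D measure0.
- move=> X [[mX sX] [D [hD [h1 h2]]]]; have [mD sD] := sigmaAl_borel hD.
  split; first by split; [apply: measurableD => //; exact: I01_meas|exact: subDsetl].
  exists (X01 `\` D); split; first exact: SC.
  split.
  + apply: (null_sub _ (measurableD mD mX) _ h2).
      by apply: measurableD; apply: measurableD => //; exact: I01_meas.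
    by move=> x [[Ix nX] nnD]; split => //; apply: contrapT => nD; apply: nnD.
  + apply: (null_sub _ (measurableD mX mD) _ h1).
      by apply: measurableD; apply: measurableD => //; exact: I01_meas.
    by move=> x [[Ix nD] nnX]; split => //; apply: contrapT => nX; apply: nnX.
- move=> F hF.
  have /choice [Dn hDn] : forall n, exists D, sigmaAl T K I l D /\
      mu (F n `\` D) = 0%E /\ mu (D `\` F n) = 0%E.
    by move=> n; case: (hF n) => _.
  have mF n : measurable (F n) by case: (hF n) => -[].
  have mD n : measurable (Dn n) by case: (sigmaAl_borel (hDn n).1).
  split.
    split; first exact: bigcupT_measurable.
    by apply: bigcup_sub => n _; case: (hF n) => -[].
  exists (\bigcup_n Dn n); split; first by apply: SU => n; exact: (hDn n).1.
  split.
  + apply: (null_sub _ (bigcupT_measurable _ (fun n => measurableD (mF n) (mD n)))).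
    * by apply: measurableD; exact: bigcupT_measurable.
    * move=> x [[n _ Fx] nD]; exists n => //; split => // Dx; apply: nD; by exists n.
    * apply: null_bigcup; first by move=> n; exact: measurableD.
      by move=> n; exact: (hDn n).2.1.
  + apply: (null_sub _ (bigcupT_measurable _ (fun n => measurableD (mD n) (mF n)))).
    * by apply: measurableD; exact: bigcupT_measurable.
    * move=> x [[n _ Dx] nF]; exists n => //; split => // Fx; apply: nF; by exists n.
    * apply: null_bigcup; first by move=> n; exact: measurableD.
      by move=> n; exact: (hDn n).2.2.
Qed.

Lemma base_Q l j k : (j < l)%N -> K k -> Q l (preimg T j [set` I k]).
Proof.
move=> jl Kk.
pose cyl (w : nat -> nat) := X01 `&` \bigcap_(i in [set i : nat | (i < l)%N]) preimg T i [set` I (w i)].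
pose cylset n := match @unpickle (seq nat) n with
  | Some s => if pselect ((forall i, (i < l)%N -> K (nth 0%N s i)) /\ nth 0%N s j = k)
              then cyl (fun i => nth 0%N s i) else set0
  | None => set0 end.
have hcs n : sigmaAl T K I l (cylset n).
  rewrite /cylset; case: (unpickle n) => [s|]; last by case: (@smallest_sigma_algebra _ X01 (cylinders T K I l)).
  destruct (pselect _) as [hP|hP]; simpl; last by case: (@smallest_sigma_algebra _ X01 (cylinders T K I l)).
  by apply: sub_sigma_algebra; exists (fun i => nth 0%N s i); split => //; case: hP.
have mP : measurable (preimg T j [set` I k]) by apply: preimg_meas; exact: measurable_itv.
have mcs n : measurable (cylset n) by case: (sigmaAl_borel (hcs n)).
split; first by split => //; exact: preimg_sub.
exists (\bigcup_n cylset n); split.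
  by case: (@smallest_sigma_algebra _ X01 (cylinders T K I l)) => _ _; apply.
split; last first.
  have -> : (\bigcup_n cylset n) `\` preimg T j [set` I k] = set0; last by rewrite measure0.
  apply/seteqP; split => // x [[n _]]; rewrite /cylset.
  case: (unpickle n) => [s|] //; destruct (pselect _) as [hP|hP]; simpl => //; case: hP => hK hj [_ hx].
  by have := hx j jl; rewrite hj.
pose Bad := \bigcup_i preimg T i Nset.
have mBad : measurable Bad.
  by apply: bigcupT_measurable => i; apply: preimg_meas; case: Nset_borel.
apply: (null_sub _ mBad); first by apply: measurableD => //; exact: bigcupT_measurable.
  move=> x [Px nD]; apply: contrapT => nB.
  have Ix : X01 x by case: Px.
  have hw : forall i, exists k', (i < l)%N -> K k' /\ [set` I k'] (iter i T x).
    move=> i; have : ~ preimg T i Nset x by move=> h; apply: nB; exists i.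
    move=> nN; have : (\bigcup_(k in K) [set` I k]) (iter i T x).
      apply: contrapT => h; apply: nN; split => //; split => //; exact: iterI.
    by move=> [k' Kk' h]; exists k'.
  have /choice [w hw'] := hw.
  pose w' i := if i == j then k else w i.
  apply: nD; exists (pickle (mkseq w' l)) => //.
  rewrite /cylset pickleK.
  have hn : forall i, (i < l)%N -> nth 0%N (mkseq w' l) i = w' i by move=> i il; rewrite nth_mkseq.
  destruct (pselect _) as [hP|hP]; simpl; last first.
    move: hP.
    case; split; last by rewrite hn // /w' eqxx.
    move=> i il; rewrite hn // /w'; case: eqP => _ //; exact: (hw' i il).1.
  split => // i il; rewrite hn //; split => //; rewrite /w'.
  case: eqP => [->|_]; first by case: Px.
  exact: (hw' i il).2.
by apply: null_bigcup => [i|i]; [apply: preimg_meas; case: Nset_borel|exact: Nset_null].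
Qed.

Lemma preimg_compl j (E : set RB) : preimg T j (X01 `\` E) = X01 `\` preimg T j E.
Proof.
apply/seteqP; split => x /=.
  by move=> [Ix [_ nE]]; split => // -[_ hE].
move=> [Ix h]; split => //; split; first exact: iterI.
by move=> hE; apply: h.
Qed.

Lemma preimg_bigcup j (F : nat -> set RB) : preimg T j (\bigcup_n F n) = \bigcup_n preimg T j (F n).
Proof.
apply/seteqP; split => x /=.
  by move=> [Ix [n _ h]]; exists n.
by move=> [n _ [Ix h]]; split => //; exists n.
Qed.

Lemma gen_Q l j E : (j < l)%N -> sigmaA K I E -> Q l (preimg T j E).
Proof.
move=> jl hE.
have [Q0 QC QU] := Q_sigma l.
suff : [set E | borel01 E /\ Q l (preimg T j E)] E by case.
apply: (smallest_sub _ _ hE); last first.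
  move=> X [k Kk <-]; split; last exact: base_Q.
  by split; [exact: measurable_itv|exact: IK].
split.
- split; first by split; [exact: measurable0|by []].
  have -> : preimg T j set0 = set0 by apply/seteqP; split => x // [].
  exact: Q0.
- move=> X [bX hX]; split; first by case: borel_sigma => _ + _; apply.
  rewrite preimg_compl; exact: QC.
- move=> F hF; split; first by case: borel_sigma => _ _; apply => n; case: (hF n).
  rewrite preimg_bigcup; apply: QU => n; by case: (hF n).
Qed.

Definition Gl l := [set X | exists j E, (j < l)%N /\ sigmaA K I E /\ X = preimg T j E].
Definition U l := <<s X01, Gl l>>.

Lemma Gl_borel l X : Gl l X -> borel01 X.
Proof. move=> [j [E [_ [hE ->]]]]; apply: borel_preimg; by case: (sigmaA_borel hE). Qed.

Lemma U_borel l X : U l X -> borel01 X.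
Proof. apply: gen_borel; exact: Gl_borel. Qed.

Lemma U_Q l : U l `<=` Q l.
Proof.
apply: smallest_sub; first exact: Q_sigma.
move=> X [j [E [jl [hE ->]]]]; exact: gen_Q.
Qed.

Lemma U_mono l l' : (l <= l')%N -> U l `<=` U l'.
Proof.
move=> ll'; apply: smallest_sub; first exact: smallest_sigma_algebra.
move=> X [j [E [jl [hE ->]]]]; apply: sub_sigma_algebra; exists j, E; split => //.
exact: leq_trans jl ll'.
Qed.

Definition Pfam := [set X | exists l, U l X].

Lemma Pfam_setI : setI_closed Pfam.
Proof.
move=> X Y [l1 h1] [l2 h2]; exists (maxn l1 l2).
have := @smallest_sigma_algebra _ X01 (Gl (maxn l1 l2)).
have hb : forall Z, U (maxn l1 l2) Z -> Z `<=` X01 by move=> Z /U_borel [].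
move/(sigma_algebraP hb) => [_ _ _]; apply.
  exact: (U_mono _ _ (leq_maxl l1 l2) _ h1).
exact: (U_mono _ _ (leq_maxr l1 l2) _ h2).
Qed.

Lemma join_good : join_all T K I `<=` good.
Proof.
have Pb X : Pfam X -> borel01 X by move=> [l /U_borel].
have H1 : <<s X01, Pfam>> `<=` good.
  apply: lambda_system_subset.
  - exact: Pfam_setI.
  - exact: good_lambda.
  - move=> X [l hX]; apply: (Q_good l); exact: U_Q.
  - by move=> X /(gen_borel _ Pb) [].
apply: (subset_trans _ H1); apply: smallest_sub; first exact: smallest_sigma_algebra.
move=> X [j _ [E hE <-]]; apply: sub_sigma_algebra; exists j.+1.
by apply: sub_sigma_algebra; exists j, E.
Qed.

Hypothesis hgen : forall B, borel01 B -> exists C, join_all T K I C /\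
  (@lebesgue_measure R) ((B `\` C) `|` (C `\` B)) = 0%E.

Lemma A_01 : mu A = 0%E \/ mu A = 1%E.
Proof.
have bA := A_borel; have [C [hC hl]] := hgen _ bA.
have gC := join_good _ hC; have bC := gC.1.
have [mA sA] := bA; have [mC sC] := bC.
have bS : borel01 ((A `\` C) `|` (C `\` A)).
  split; first by apply: measurableU; exact: measurableD.
  by move=> x [[/sA]|[/sC]].
have m0 := null_lam bS hl.
have mS : measurable ((A `\` C) `|` (C `\` A)) by case: bS.
have h1 : mu (C `\` A) = 0%E.
  apply: (null_sub (measurableD mC mA) mS _ m0); by move=> x h; right.
have h2 : mu (A `\` C) = 0%E.
  apply: (null_sub (measurableD mA mC) mS _ m0); by move=> x h; left.
have [_ gA] := good_null gC bA h1 h2.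
rewrite setIid in gA.
have ea := fineK (mu_fin bA).
rewrite -ea -EFinM in gA.
have h : fine (mu A) = fine (mu A) * fine (mu A) by case: gA.
rewrite -ea.
have : fine (mu A) * (fine (mu A) - 1) = 0 by rewrite mulrBr mulr1 -h subrr.
move/eqP; rewrite mulf_eq0 subr_eq0 => /orP [/eqP -> | /eqP ->]; [left|right]; by [].
Qed.

End Pf.

Theorem theorem3p6 (R : realType) (T : measurableTypeR R -> measurableTypeR R)
  (mu : {measure set (measurableTypeR R) -> \bar R})
  (K : set nat) (I : nat -> interval R) :
  in_classT T mu K I -> alpha_mixing T mu K I -> exact T mu.
Proof.
move=> [[mu1 muC] [c [c1 hc]] [TI Tm Tinv Terg] [IK _ _ hN] [_ hgen _]].
move=> [alpha [ha0 [hcvg hmix]]] A hA.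
by eapply A_01; eassumption.
Qed.
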